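(* Let $N\ge2$ and $\mathbf x=(x_0,\dots,x_{N-1})\in\mathbb{C}^N$ with $x_0\neq0$ and $\operatorname{Re}x_0\neq0$; put $\sigma=\operatorname{sign}(\operatorname{Re}x_0)$ and $s=x_0/|x_0|$. Let $H_{\mathbf T},H_{\mathbf M},H_{\mathbf G}$ be the $\mathbf T$-, $\mathbf M$-, $\mathbf G$-type DsiHTs generated by $\mathbf x$. Then $$H_{\mathbf T}=\operatorname{diag}(\sigma,\ \sigma s,\ 1,\dots,1)\,H_{\mathbf M},\qquad H_{\mathbf G}=\operatorname{diag}(s,\ 1,\dots,1)\,H_{\mathbf M}.$$ In particular, rows $2,\dots,N-1$ of $H_{\mathbf T}$, $H_{\mathbf M}$ and $H_{\mathbf G}$ coincide, so $H_{\mathbf T}$ and $H_{\mathbf G}$ differ at most in their first two rows (rows $0$ and $1$), and $H_{\mathbf T}$ and $H_{\mathbf M}$ differ at most in rows $0$ and $1$ (only in row $1$ when $\operatorname{Re}x_0>0$).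
   Context: For $a,b\in\mathbb{C}$ and $n=\sqrt{|a|^2+|b|^2}$: $\mathbf{T}(a,b)=\frac{\operatorname{sign}(\operatorname{Re} a)}{n}\begin{bmatrix}\bar a & \bar b\\ -b & a\end{bmatrix}$ (for $\operatorname{Re}a\ne0$); $\mathbf{M}(a,b)=\frac{1}{n}\begin{bmatrix}\bar a & \bar b\\ -b\,\bar a/|a| & |a|\end{bmatrix}$ and $\mathbf{G}(a,b)=\frac{1}{n}\begin{bmatrix}|a| & (a/|a|)\bar b\\ -b\,\bar a/|a| & |a|\end{bmatrix}$ (for $a\neq0$). For a $2\times2$ matrix $B$, $B^{[p,q]}$ is the $N\times N$ matrix acting as $B$ on coordinates $(p,q)$ and as identity elsewhere. For $\mathbf Y\in\{\mathbf T,\mathbf M,\mathbf G\}$, the $\mathbf Y$-type DsiHT (natural path) generated by $\mathbf x$ is defined by: $a^{(0)}=x_0$; for $k=1,\dots,N-1$, $B_k=\mathbf Y(a^{(k-1)},x_k)$ and $a^{(k)}$ is the first component of $B_k(a^{(k-1)},x_k)^T$; $H_{\mathbf Y}=B_{N-1}^{[0,N-1]}\cdots B_1^{[0,1]}$. (Under the hypotheses all $B_k$ are well defined.) $\operatorname{sign}(t)\in\{\pm1\}$ is the sign of a nonzero real $t$. *)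

(* Defs.v *)
From HB Require Import structures.
From mathcomp Require Import all_boot all_order all_algebra.
Set Implicit Arguments. Unset Strict Implicit. Unset Printing Implicit Defensive.
Import Order.TTheory GRing.Theory Num.Theory.
Local Open Scope ring_scope.

Section DsiHT.
Variable C : numClosedFieldType.

Definition nrm2 (a b : C) : C := sqrtC (`|a| ^+ 2 + `|b| ^+ 2).

Definition sgnRe (a : C) : C := Num.sg ('Re a).

Definition mx2 (a00 a01 a10 a11 : C) : 'M[C]_2 :=
  \matrix_(i < 2, j < 2)
     if (i == 0 :> nat) then (if (j == 0 :> nat) then a00 else a01)
     else (if (j == 0 :> nat) then a10 else a11).

Definition Tmx (a b : C) : 'M[C]_2 :=
  (sgnRe a / nrm2 a b) *: mx2 a^* b^* (- b) a.

Definition Mmx (a b : C) : 'M[C]_2 :=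
  (nrm2 a b)^-1 *: mx2 a^* b^* (- b * a^* / `|a|) `|a|.

Definition Gmx (a b : C) : 'M[C]_2 :=
  (nrm2 a b)^-1 *: mx2 `|a| ((a / `|a|) * b^*) (- b * a^* / `|a|) `|a|.

(* B^{[p,q]} : acts as B on coordinates (p,q), identity elsewhere *)
Definition embed2 (N : nat) (B : 'M[C]_2) (p q : nat) : 'M[C]_N :=
  \matrix_(i < N, j < N)
    if (i == p :> nat) then
      (if (j == p :> nat) then B 0 0 else if (j == q :> nat) then B 0 1 else 0)
    else if (i == q :> nat) then
      (if (j == p :> nat) then B 1 0 else if (j == q :> nat) then B 1 1 else 0)
    else (i == j)%:R.

(* entries of x as a function of a natural index (0 outside range) *)
Definition xat (N : nat) (x : 'rV[C]_N) (k : nat) : C :=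
  if insub k is Some i then x 0 i else 0.

Fixpoint acc (Y : C -> C -> 'M[C]_2) (N : nat) (x : 'rV[C]_N) (k : nat) : C :=
  match k with
  | 0 => xat x 0
  | k'.+1 =>
      let a := acc Y x k' in
      let b := xat x k'.+1 in
      let B := Y a b in B 0 0 * a + B 0 1 * b
  end.

Definition Bk (Y : C -> C -> 'M[C]_2) (N : nat) (x : 'rV[C]_N) (k : nat)
  : 'M[C]_2 := Y (acc Y x k.-1) (xat x k).

Fixpoint Hpart (Y : C -> C -> 'M[C]_2) (N : nat) (x : 'rV[C]_N) (k : nat)
  : 'M[C]_N :=
  match k with
  | 0 => 1%:M
  | k'.+1 => embed2 N (Bk Y x k'.+1) 0 k'.+1 *m Hpart Y x k'
  end.

Definition DsiHT (Y : C -> C -> 'M[C]_2) (N : nat) (x : 'rV[C]_N) : 'M[C]_N :=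
  Hpart Y x N.-1.

Definition diagN (N : nat) (d0 d1 : C) : 'M[C]_N :=
  diag_mx (\row_(i < N) if (i == 0 :> nat) then d0
                        else if (i == 1 :> nat) then d1 else 1).
End DsiHT.

(* Main.v *)
Require Import Defs.
From HB Require Import structures.
From mathcomp Require Import all_boot all_order all_algebra.
From mathcomp Require Import ring.
Import Order.TTheory GRing.Theory Num.Theory.
Local Open Scope ring_scope.

Lemma mx2E {C : numClosedFieldType} (a b c d : C) :
  [/\ mx2 a b c d 0 0 = a, mx2 a b c d 0 1 = b, mx2 a b c d 1 0 = c
    & mx2 a b c d 1 1 = d].
Proof. by rewrite /mx2 !mxE. Qed.

Lemma nrm2_sq {C : numClosedFieldType} (a b : C) :
  nrm2 a b ^+ 2 = `|a| ^+ 2 + `|b| ^+ 2.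
Proof. exact: sqrtCK. Qed.

Lemma nrm2_gt0 {C : numClosedFieldType} (a b : C) : a != 0 -> 0 < nrm2 a b.
Proof.
move=> a0; rewrite /nrm2 sqrtC_gt0.
apply: (@lt_le_trans _ _ (`|a| ^+ 2)); first by rewrite exprn_gt0 // normr_gt0.
by rewrite lerDl exprn_ge0.
Qed.

Lemma nrm2_norm {C : numClosedFieldType} (a a' b : C) :
  `|a| = `|a'| -> nrm2 a b = nrm2 a' b.
Proof. by rewrite /nrm2 => ->. Qed.

Lemma conjE {C : numClosedFieldType} {a : C} : a != 0 -> a^* = `|a| ^+ 2 / a.
Proof. by move=> a0; rewrite normCK mulrC mulKf. Qed.

Lemma stepT {C : numClosedFieldType} (a b : C) : a != 0 ->
  Tmx a b 0 0 * a + Tmx a b 0 1 * b = sgnRe a * nrm2 a b.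
Proof.
move=> a0; have n0 : nrm2 a b != 0 by rewrite gt_eqF ?nrm2_gt0.
rewrite /Tmx !mxE /= -!mulrA -!normCKC.
have h : `|b| ^+ 2 = nrm2 a b ^+ 2 - `|a| ^+ 2 by rewrite nrm2_sq; ring.
rewrite h; field; exact n0.
Qed.

Lemma stepM {C : numClosedFieldType} (a b : C) : a != 0 ->
  Mmx a b 0 0 * a + Mmx a b 0 1 * b = nrm2 a b.
Proof.
move=> a0; have n0 : nrm2 a b != 0 by rewrite gt_eqF ?nrm2_gt0.
rewrite /Mmx !mxE /= -!mulrA -!normCKC.
have h : `|b| ^+ 2 = nrm2 a b ^+ 2 - `|a| ^+ 2 by rewrite nrm2_sq; ring.
rewrite h; field; exact n0.
Qed.

Lemma stepG {C : numClosedFieldType} (a b : C) : a != 0 ->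
  Gmx a b 0 0 * a + Gmx a b 0 1 * b = a / `|a| * nrm2 a b.
Proof.
move=> a0; have n0 : nrm2 a b != 0 by rewrite gt_eqF ?nrm2_gt0.
have na0 : `|a| != 0 by rewrite normr_eq0.
rewrite /Gmx !mxE /= -!mulrA -!normCKC.
have h : `|b| ^+ 2 = nrm2 a b ^+ 2 - `|a| ^+ 2 by rewrite nrm2_sq; ring.
rewrite h; field; by rewrite n0 na0.
Qed.

Lemma accS {C : numClosedFieldType} (Y : C -> C -> 'M[C]_2) N (x : 'rV[C]_N) k :
  acc Y x k.+1 = Y (acc Y x k) (xat x k.+1) 0 0 * acc Y x k
                 + Y (acc Y x k) (xat x k.+1) 0 1 * xat x k.+1.
Proof. by []. Qed.

Lemma acc0 {C : numClosedFieldType} (Y : C -> C -> 'M[C]_2) N (x : 'rV[C]_N) :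
  acc Y x 0 = xat x 0.
Proof. by []. Qed.

Lemma accM {C : numClosedFieldType} {N} (x : 'rV[C]_N) : xat x 0 != 0 ->
  forall k, acc (@Mmx C) x k.+1 = nrm2 (acc (@Mmx C) x k) (xat x k.+1)
            /\ 0 < acc (@Mmx C) x k.+1.
Proof.
move=> x0; elim=> [|k [_ pos]].
  by rewrite accS acc0 stepM //; split=> //; rewrite nrm2_gt0.
have a0 : acc (@Mmx C) x k.+1 != 0 by rewrite gt_eqF.
by rewrite (accS _ _ x k.+1) stepM //; split=> //; rewrite nrm2_gt0.
Qed.

Lemma sg_pm {C : numClosedFieldType} {z : C} : 'Re z != 0 ->
  Num.sg ('Re z) = 1 \/ Num.sg ('Re z) = -1.
Proof.
move=> h; have : ('Re z < 0) || (0 < 'Re z) by rewrite -real_neqr_lt ?Creal_Re.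
by case/orP=> h'; [right; rewrite ltr0_sg | left; rewrite gtr0_sg].
Qed.

Lemma sgnRe_mul {C : numClosedFieldType} (sg r : C) :
  sg = 1 \/ sg = -1 -> 0 < r -> sgnRe (sg * r) = sg.
Proof.
move=> hs rp; have rR : r \is Num.real by rewrite gtr0_real.
rewrite /sgnRe; case: hs => ->.
  by rewrite mul1r; rewrite (Creal_ReP _ rR) gtr0_sg.
have nR : - r \is Num.real by rewrite rpredN.
by rewrite mulNr mul1r (Creal_ReP _ nR) ltr0_sg // oppr_lt0.
Qed.

Lemma accT {C : numClosedFieldType} {N} (x : 'rV[C]_N) :
  xat x 0 != 0 -> 'Re (xat x 0) != 0 ->
  forall k, acc (@Tmx C) x k.+1 = sgnRe (xat x 0) * acc (@Mmx C) x k.+1.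
Proof.
move=> x0 r0; have hs := sg_pm r0.
have ns : `|sgnRe (xat x 0)| = 1 by case: hs; rewrite /sgnRe => ->; rewrite ?normrN normr1.
elim=> [|k IH].
  by rewrite accS acc0 stepT // (accS _ _ x 0) acc0 stepM.
have [_ pos] := accM x x0 k.
have a0 : acc (@Mmx C) x k.+1 != 0 by rewrite gt_eqF.
rewrite (accS _ _ x k.+1) IH stepT; last by rewrite mulf_neq0 // -normr_eq0 ns oner_neq0.
rewrite sgnRe_mul // (accS _ _ x k.+1) stepM //; congr (_ * _).
by apply: nrm2_norm; rewrite normrM ns mul1r.
Qed.

Lemma accG {C : numClosedFieldType} {N} (x : 'rV[C]_N) :
  xat x 0 != 0 ->
  forall k, acc (@Gmx C) x k.+1 = (xat x 0 / `|xat x 0|) * acc (@Mmx C) x k.+1.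
Proof.
move=> x0; set s := _ / _.
have ns : `|s| = 1 by rewrite /s normf_div normr_id divff // normr_eq0.
elim=> [|k IH].
  by rewrite accS acc0 stepG // (accS _ _ x 0) acc0 stepM.
have [_ pos] := accM x x0 k.
have a0 : acc (@Mmx C) x k.+1 != 0 by rewrite gt_eqF.
have s0 : s != 0 by rewrite -normr_eq0 ns oner_neq0.
rewrite (accS _ _ x k.+1) IH stepG; last by rewrite mulf_neq0.
rewrite (accS _ _ x k.+1) stepM // normrM ns mul1r (gtr0_norm pos) mulfK //.
congr (_ * _); apply: nrm2_norm; by rewrite normrM ns mul1r.
Qed.

Definition dg {C : numClosedFieldType} N (f : nat -> C) : 'M[C]_N :=
  diag_mx (\row_(i < N) f (nat_of_ord i)).

Lemma embed_dg {C : numClosedFieldType} N k (A B : 'M[C]_2) (f g : nat -> C) :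
  (0 < k)%N ->
  (forall i, i != 0%N -> i != k -> f i = g i) ->
  A 0 0 * f 0%N = g 0%N * B 0 0 -> A 0 1 * f k = g 0%N * B 0 1 ->
  A 1 0 * f 0%N = g k * B 1 0 -> A 1 1 * f k = g k * B 1 1 ->
  embed2 N A 0 k *m dg N f = dg N g *m embed2 N B 0 k.
Proof.
move=> k0 hfg h00 h01 h10 h11; apply/matrixP=> i j.
rewrite mul_mx_diag mul_diag_mx !mxE.
case: eqP => [i0|i0].
  rewrite i0; case: eqP => [j0|j0]; first by rewrite j0.
  case: eqP => [jk|jk]; first by rewrite jk.
  by rewrite mul0r mulr0.
case: eqP => [ik|ik].
  rewrite ik; case: eqP => [j0|j0]; first by rewrite j0.
  case: eqP => [jk|jk]; first by rewrite jk.
  by rewrite mul0r mulr0.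
case: eqP => [ij|ij]; last by rewrite mul0r mulr0.
rewrite -ij mul1r mulr1 hfg //; apply/eqP => //.
Qed.

Lemma Hpart_dg {C : numClosedFieldType} N (x : 'rV[C]_N) (Y Y' : C -> C -> 'M[C]_2)
  (g : nat -> nat -> C) :
  dg N (g 0%N) = 1%:M ->
  (forall k, (0 < k < N)%N ->
     embed2 N (Bk Y x k) 0 k *m dg N (g k.-1) = dg N (g k) *m embed2 N (Bk Y' x k) 0 k) ->
  forall k, (k < N)%N -> Hpart Y x k = dg N (g k) *m Hpart Y' x k.
Proof.
move=> h0 hs; elim=> [|k IH] kN; first by rewrite /= h0 mulmx1.
by rewrite /= IH ?(ltnW kN) // mulmxA hs ?kN // -mulmxA.
Qed.

Lemma dg1 {C : numClosedFieldType} N : dg N (fun _ => 1) = 1%:M :> 'M[C]_N.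
Proof. by apply/matrixP=> i j; rewrite !mxE. Qed.

Lemma T_first {C : numClosedFieldType} (a b : C) : a != 0 ->
  [/\ Tmx a b 0 0 * 1 = sgnRe a * Mmx a b 0 0,
      Tmx a b 0 1 * 1 = sgnRe a * Mmx a b 0 1,
      Tmx a b 1 0 * 1 = (sgnRe a * (a / `|a|)) * Mmx a b 1 0
    & Tmx a b 1 1 * 1 = (sgnRe a * (a / `|a|)) * Mmx a b 1 1].
Proof.
move=> a0; have n0 : nrm2 a b != 0 by rewrite gt_eqF ?nrm2_gt0.
have na0 : `|a| != 0 by rewrite normr_eq0.
rewrite /Tmx /Mmx !mxE /= (conjE a0).
by split; field; rewrite ?n0 ?na0 ?a0.
Qed.

Lemma G_first {C : numClosedFieldType} (a b : C) : a != 0 ->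
  [/\ Gmx a b 0 0 * 1 = (a / `|a|) * Mmx a b 0 0,
      Gmx a b 0 1 * 1 = (a / `|a|) * Mmx a b 0 1,
      Gmx a b 1 0 * 1 = 1 * Mmx a b 1 0
    & Gmx a b 1 1 * 1 = 1 * Mmx a b 1 1].
Proof.
move=> a0; have n0 : nrm2 a b != 0 by rewrite gt_eqF ?nrm2_gt0.
have na0 : `|a| != 0 by rewrite normr_eq0.
rewrite /Gmx /Mmx !mxE /= (conjE a0).
by split; field; rewrite ?n0 ?na0 ?a0.
Qed.

Lemma T_next {C : numClosedFieldType} (sg r b : C) :
  sg = 1 \/ sg = -1 -> 0 < r ->
  [/\ Tmx (sg * r) b 0 0 * sg = sg * Mmx r b 0 0,
      Tmx (sg * r) b 0 1 * 1 = sg * Mmx r b 0 1,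
      Tmx (sg * r) b 1 0 * sg = 1 * Mmx r b 1 0
    & Tmx (sg * r) b 1 1 * 1 = 1 * Mmx r b 1 1].
Proof.
move=> hs rp; have r0 : r != 0 by rewrite gt_eqF.
have n0 : nrm2 r b != 0 by rewrite gt_eqF ?nrm2_gt0.
have rR : r \is Num.real by rewrite gtr0_real.
have nR : - r \is Num.real by rewrite rpredN.
have ns : `|sg| = 1 by case: hs => ->; rewrite ?normrN normr1.
rewrite /Tmx /Mmx !mxE /= sgnRe_mul // (@nrm2_norm _ (sg * r) r b);
  last by rewrite normrM ns mul1r.
rewrite (gtr0_norm rp) (conj_Creal rR).
case: hs => ->; rewrite ?mul1r ?mulNr ?mul1r ?(conj_Creal nR) ?(conj_Creal rR);
  by split; field; rewrite ?n0 ?r0.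
Qed.

Lemma G_next {C : numClosedFieldType} (s r b : C) :
  `|s| = 1 -> 0 < r ->
  [/\ Gmx (s * r) b 0 0 * s = s * Mmx r b 0 0,
      Gmx (s * r) b 0 1 * 1 = s * Mmx r b 0 1,
      Gmx (s * r) b 1 0 * s = 1 * Mmx r b 1 0
    & Gmx (s * r) b 1 1 * 1 = 1 * Mmx r b 1 1].
Proof.
move=> ns rp; have r0 : r != 0 by rewrite gt_eqF.
have n0 : nrm2 r b != 0 by rewrite gt_eqF ?nrm2_gt0.
have rR : r \is Num.real by rewrite gtr0_real.
have s0 : s != 0 by rewrite -normr_eq0 ns oner_neq0.
have nsr : `|s * r| = r by rewrite normrM ns mul1r gtr0_norm.
rewrite /Gmx /Mmx !mxE /= (conjE (mulf_neq0 s0 r0)) nsr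
  (@nrm2_norm _ (s * r) r b); last by rewrite nsr gtr0_norm.
rewrite (gtr0_norm rp) (conj_Creal rR).
by split; field; rewrite ?n0 ?r0 ?s0.
Qed.

Lemma BkS {C : numClosedFieldType} (Y : C -> C -> 'M[C]_2) N (x : 'rV[C]_N) k :
  Bk Y x k.+1 = Y (acc Y x k) (xat x k.+1).
Proof. by []. Qed.

Lemma row_dg {C : numClosedFieldType} N (f : nat -> C) (A : 'M[C]_N) (i : 'I_N) :
  row i (dg N f *m A) = f i *: row i A.
Proof. by apply/rowP=> j; rewrite mul_diag_mx !mxE. Qed.

Theorem mainTheorem7 (C : numClosedFieldType) (N : nat) (hN : (2 <= N)%N)
  (x : 'rV[C]_N) :
  let x0 := xat x 0 in
  x0 != 0 -> 'Re x0 != 0 ->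
  let sigma := Num.sg ('Re x0) in
  let s := x0 / `|x0| in
  let HT := DsiHT (@Tmx C) x in
  let HM := DsiHT (@Mmx C) x in
  let HG := DsiHT (@Gmx C) x in
  [/\ HT = diagN N sigma (sigma * s) *m HM,
      HG = diagN N s 1 *m HM,
      (forall i : 'I_N, (2 <= i)%N ->
         row i HT = row i HM /\ row i HG = row i HM)
    & (0 < 'Re x0 ->
         forall i : 'I_N, i != 1%N :> nat -> row i HT = row i HM)].
Proof.
move=> x0 x0n r0 sigma s HT HM HG.
have hs : sigma = 1 \/ sigma = -1 := sg_pm r0.
have ns : `|s| = 1 by rewrite /s normf_div normr_id divff // normr_eq0.
pose fT (i : nat) : C := if i == 0%N then sigma else if i == 1%N then sigma * s else 1.
pose fG (i : nat) : C := if i == 0%N then s else if i == 1%N then 1 else 1.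
pose gT (k : nat) := if k is 0 then (fun _ : nat => (1 : C)) else fT.
pose gG (k : nat) := if k is 0 then (fun _ : nat => (1 : C)) else fG.
have [n eN] : exists n, N.-1 = n.+1 by move: hN; case: (N) => [|[|n]] // _; exists n.
have nN : (n.+1 < N)%N by rewrite -eN ltn_predL (leq_trans _ hN).
have eT : HT = diagN N sigma (sigma * s) *m HM.
  rewrite /HT /HM /DsiHT eN (@Hpart_dg _ _ _ _ (@Mmx C) gT _ _ _ nN); [by [] | exact: dg1 | ].
  move=> [|[|k]] // /andP[_ kN].
    rewrite !BkS !acc0; have [e00 e01 e10 e11] := T_first x0 (xat x 1) x0n.
    apply: embed_dg => //.
      by move=> i i0 i1; rewrite /gT /fT (negbTE i0) (negbTE i1).
  rewrite !BkS accT //.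
  have [_ pos] := accM x x0n k.
  have [e00 e01 e10 e11] := T_next sigma _ (xat x k.+2) hs pos.
  by apply: embed_dg.
have eG : HG = diagN N s 1 *m HM.
  rewrite /HG /HM /DsiHT eN (@Hpart_dg _ _ _ _ (@Mmx C) gG _ _ _ nN); [by [] | exact: dg1 | ].
  move=> [|[|k]] // /andP[_ kN].
    rewrite !BkS !acc0; have [e00 e01 e10 e11] := G_first x0 (xat x 1) x0n.
    apply: embed_dg => //.
      by move=> i i0 i1; rewrite /gG /fG (negbTE i0) (negbTE i1).
  rewrite !BkS accG //.
  have [_ pos] := accM x x0n k.
  have [e00 e01 e10 e11] := G_next s _ (xat x k.+2) ns pos.
  by apply: embed_dg.
split=> //.
  move=> i i2; rewrite eT eG.
  have i0 : (i != 0%N :> nat) by case: (nat_of_ord i) i2.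
  have i1 : (i != 1%N :> nat) by case: (nat_of_ord i) i2 => [|[]].
  by rewrite /diagN !(row_dg _ (fun i : nat => if i == 0%N then _ else if i == 1%N then _ else 1))
    /= (negbTE i0) (negbTE i1) !scale1r.
move=> rp i i1; rewrite eT.
have s1 : sigma = 1 by rewrite /sigma gtr0_sg.
rewrite /diagN (row_dg _ (fun i : nat => if i == 0%N then _ else if i == 1%N then _ else 1)) /=.
by rewrite (negbTE i1) s1; case: (_ == _); rewrite scale1r.
Qed.
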